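(* Let $\mathcal S$ be a non-degenerate affine zipper with signature $(0,\dots,0)$ whose matrices have dominated splitting of index-1 with multicone $M$. Then there exist integers $n,l,m\ge1$ and a word $\bar\jmath$ with $|\bar\jmath|=l$ such that $B_{n,l,m}\cap[\bar\jmath]=\emptyset$.
   Context: Affine zipper with signature $(0,\dots,0)$: $f_i(x)=A_ix+t_i$ ($i=0,\dots,N-1$) on $\mathbb R^d$, $A_i$ invertible, each $f_i$ a contraction, vertices $z_0,\dots,z_N$ with $f_i(z_0)=z_i$, $f_i(z_N)=z_{i+1}$; $\Gamma=\bigcup_if_i(\Gamma)$ the attractor. For a word $\bar\imath=i_1\dots i_k$: $A_{\bar\imath}=A_{i_1}\cdots A_{i_k}$, $f_{\bar\imath}=f_{i_1}\circ\dots\circ f_{i_k}$, $\Gamma_{\bar\imath}=f_{\bar\imath}(\Gamma)$. Dominated splitting of index-1: there is a nonempty open $M\subset\mathbb{PR}^{d-1}$ ($\langle w\rangle$ the line through $w\ne0$; projective action $\langle w\rangle\mapsto\langle Aw\rangle$) with finitely many components with pairwise disjoint closures, $\bigcup_iA_i\overline M\subset M^o$, and some hyperplane transverse to all elements of $\overline M$. For $x\in\mathbb R^d$, $M(x)=\{y\ne x:\langle y-x\rangle\in M\}$. Non-degenerate: there is a bounded open $U$ with $f_i(U)\cap f_j(U)=\emptyset$ ($i\ne j$), $\Gamma\cap U\ne\emptyset$, and $\langle z_N-z_0\rangle\notin\bigcap_{k\ge0}\bigcap_{|\bar\imath|=k}A_{\bar\imath}^{-1}(M^c)$. Symbolic: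 $\Sigma=\{0,\dots,N-1\}^{\mathbb N}$, $[\bar\jmath]$ the cylinder of sequences starting with $\bar\jmath$, $\mathbf i|_l=i_1\dots i_l$; $\Pi(\mathbf i)=\lim_nf_{i_1}\circ\dots\circ f_{i_n}(0)$. Sets $B_{n,l,m}$: for $n,l,m\ge1$, $B_{n,l,m}$ is the set of $\mathbf i\in\Sigma$ such that $\big(M(\Pi(\mathbf i))\setminus B_{1/n}(\Pi(\mathbf i))\big)\cap\big(\Gamma\setminus(\Gamma_{\mathbf i|_l}\cup\Gamma_{\mathbf i|_{l-1}(i_l-1)(N-1)^m}\cup\Gamma_{\mathbf i|_{l-1}(i_l+1)0^m})\big)=\emptyset$, where $B_r(x)$ is the open ball, $\mathbf i|_{l-1}(i_l-1)(N-1)^m$ is the word $i_1\dots i_{l-1}$ followed by the symbol $i_l-1$ and then $m$ copies of $N-1$ (similarly for the other word), and by convention $\Gamma_{\mathbf i|_{l-1}(i_l-1)(N-1)^m}=\emptyset$ if $i_l=0$, $\Gamma_{\mathbf i|_{l-1}(i_l+1)0^m}=\emptyset$ if $i_l=N-1$. *)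

(* Defs.v *)
From Stdlib Require Import Reals ClassicalEpsilon.
From Stdlib Require List.
From mathcomp Require Import ssreflect ssrfun ssrbool eqtype ssrnat seq fintype bigop.

Set Implicit Arguments.
Unset Strict Implicit.
Unset Printing Implicit Defensive.

Local Open Scope R_scope.

Definition Vec (d : nat) := 'I_d -> R.
Definition Mat (d : nat) := 'I_d -> 'I_d -> R.

Definition vzero (d : nat) : Vec d := fun _ => 0.
Definition vadd (d : nat) (x y : Vec d) : Vec d := fun i => x i + y i.
Definition vsub (d : nat) (x y : Vec d) : Vec d := fun i => x i - y i.
Definition vscale (d : nat) (c : R) (x : Vec d) : Vec d := fun i => c * x i.
Definition vdot (d : nat) (x y : Vec d) : R := \big[Rplus/0]_(i < d) (x i * y i).
Definition mv (d : nat) (A : Mat d) (x : Vec d) : Vec d :=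
  fun i => \big[Rplus/0]_(j < d) (A i j * x j).

Definition vnorm (d : nat) (x : Vec d) : R := sqrt (vdot x x).
Definition dist (d : nat) (x y : Vec d) : R := vnorm (vsub x y).
Definition is_open (d : nat) (U : Vec d -> Prop) : Prop :=
  forall x, U x -> exists e, 0 < e /\ forall y, dist y x < e -> U y.
Definition is_bounded (d : nat) (U : Vec d -> Prop) : Prop :=
  exists Rb, forall x, U x -> vnorm x <= Rb.
Definition is_compact (d : nat) (K : Vec d -> Prop) : Prop :=
  forall (I : Type) (V : I -> Vec d -> Prop),
    (forall i, is_open (V i)) -> (forall x, K x -> exists i, V i x) ->
    exists l : list I, forall x, K x -> exists i, List.In i l /\ V i x.

Definition invertible (d : nat) (A : Mat d) : Prop :=
  exists B : Mat d, forall x, mv B (mv A x) = x /\ mv A (mv B x) = x.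
Definition is_contraction (d : nat) (F : Vec d -> Vec d) : Prop :=
  exists c, 0 <= c < 1 /\ forall x y, dist (F x) (F y) <= c * dist x y.

Definition fmap (d : nat) (A : nat -> Mat d) (t : nat -> Vec d) (i : nat) (x : Vec d) : Vec d :=
  vadd (mv (A i) x) (t i).
(** fword w x = f_{w_1} ( f_{w_2} ( ... f_{w_k} x)) *)
Definition fword (d : nat) (A : nat -> Mat d) (t : nat -> Vec d) (w : seq nat) (x : Vec d) : Vec d :=
  foldr (fun i y => fmap A t i y) x w.
Definition Aword (d : nat) (A : nat -> Mat d) (w : seq nat) (v : Vec d) : Vec d :=
  foldr (fun i y => mv (A i) y) v w.
Definition Gword (d : nat) (A : nat -> Mat d) (t : nat -> Vec d) (G : Vec d -> Prop)
  (w : seq nat) : Vec d -> Prop :=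
  fun y => exists x, G x /\ y = fword A t w x.

(** Affine zipper with signature (0,...,0), vertices z_0..z_N. *)
Definition zipper0 (d N : nat) (A : nat -> Mat d) (t : nat -> Vec d) (z : nat -> Vec d) : Prop :=
  (forall i, (i < N)%N -> invertible (A i) /\ is_contraction (fmap A t i)) /\
  (forall i, (i < N)%N -> fmap A t i (z 0%N) = z i /\ fmap A t i (z N) = z i.+1).

Definition is_attractor (d N : nat) (A : nat -> Mat d) (t : nat -> Vec d) (G : Vec d -> Prop) : Prop :=
  (exists x, G x) /\ is_compact G /\
  (forall y, G y <-> exists i, (i < N)%N /\ exists x, G x /\ y = fmap A t i x).

(** Symbolic space: a sequence ii with ii k = i_{k+1}. *)
Definition inSigma (N : nat) (ii : nat -> nat) : Prop := forall k, (ii k < N)%N.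
Definition pref (ii : nat -> nat) (l : nat) : seq nat := mkseq ii l.
Definition cylinder (j : seq nat) (ii : nat -> nat) : Prop :=
  forall k, (k < size j)%N -> ii k = nth 0%N j k.

Definition converges (d : nat) (s : nat -> Vec d) (x : Vec d) : Prop :=
  forall e, 0 < e -> exists n0, forall n, (n0 <= n)%N -> dist (s n) x < e.
Definition Pi (d : nat) (A : nat -> Mat d) (t : nat -> Vec d) (ii : nat -> nat) : Vec d :=
  epsilon (inhabits (@vzero d))
    (fun x => converges (fun n => fword A t (pref ii n) (@vzero d)) x).

(** Subsets of projective space PR^{d-1} are encoded by cones: a set S of
    lines is encoded by C = { w <> 0 : <w> \in S }.  Open sets of PR^{d-1}
    correspond to open cones of R^d (quotient topology). *)
Definition is_cone (d : nat) (C : Vec d -> Prop) : Prop :=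
  (forall v, C v -> v <> @vzero d) /\ (forall v c, C v -> c <> 0 -> C (vscale c v)).
Definition open_cone (d : nat) (U : Vec d -> Prop) : Prop := is_cone U /\ is_open U.
Definition pclosure (d : nat) (C : Vec d -> Prop) : Vec d -> Prop :=
  fun w => w <> @vzero d /\ forall e, 0 < e -> exists v, C v /\ dist v w < e.
Definition pconnected (d : nat) (C : Vec d -> Prop) : Prop :=
  ~ exists U V : Vec d -> Prop,
      open_cone U /\ open_cone V /\
      (forall v, C v -> U v \/ V v) /\
      (exists v, C v /\ U v) /\ (exists v, C v /\ V v) /\
      (forall v, C v -> U v -> V v -> False).

Definition dominated_index1 (d N : nat) (A : nat -> Mat d) (Mc : Vec d -> Prop) : Prop :=
  open_cone Mc /\ (exists v, Mc v) /\
  (exists (k : nat) (Comp : nat -> Vec d -> Prop),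
     (forall j, (j < k)%N ->
        open_cone (Comp j) /\ (exists v, Comp j v) /\ pconnected (Comp j)) /\
     (forall v, Mc v <-> exists j, (j < k)%N /\ Comp j v) /\
     (forall j1 j2, (j1 < k)%N -> (j2 < k)%N -> j1 <> j2 ->
        forall v, pclosure (Comp j1) v -> pclosure (Comp j2) v -> False)) /\
  (* U_i A_i closure(M) \subset interior(M) = M *)
  (forall i, (i < N)%N -> forall v, pclosure Mc v -> Mc (mv (A i) v)) /\
  (exists phi : Vec d, forall v, pclosure Mc v -> vdot phi v <> 0).

Definition nondegenerate (d N : nat) (A : nat -> Mat d) (t : nat -> Vec d) (z : nat -> Vec d)
  (G : Vec d -> Prop) (Mc : Vec d -> Prop) : Prop :=
  (exists U : Vec d -> Prop,
     is_open U /\ is_bounded U /\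
     (forall i j, (i < N)%N -> (j < N)%N -> i <> j ->
        forall y, (exists x, U x /\ y = fmap A t i x) ->
                  (exists x, U x /\ y = fmap A t j x) -> False) /\
     (exists x, G x /\ U x)) /\
  (* <z_N - z_0> not in the intersection over all words w of A_w^{-1}(M^c) *)
  (exists w : seq nat, all (fun i => (i < N)%N) w /\ Mc (Aword A w (vsub (z N) (z 0%N)))).

Definition inB (d N : nat) (A : nat -> Mat d) (t : nat -> Vec d) (G : Vec d -> Prop)
  (Mc : Vec d -> Prop) (n l m : nat) (ii : nat -> nat) : Prop :=
  inSigma N ii /\
  let x := Pi A t ii in
  let il := ii l.-1 in
  forall y,
    Mc (vsub y x) ->                         (* y \in M(Pi(i)) *)
    ~ (dist y x < / INR n) ->
    G y ->
    ~ Gword A t G (pref ii l) y ->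
    ~ (il <> 0%N /\ Gword A t G (rcons (pref ii l.-1) il.-1 ++ nseq m N.-1) y) ->
    ~ (il <> N.-1 /\ Gword A t G (rcons (pref ii l.-1) il.+1 ++ nseq m 0%N) y) ->
    False.

(* Main.v *)
Require Import Defs.
From HB Require Import structures.
From Stdlib Require Import Reals Lra ClassicalEpsilon FunctionalExtensionality.
From Stdlib Require List.
From mathcomp Require Import ssreflect ssrfun ssrbool eqtype ssrnat seq fintype bigop.
Require Import Defs.

HB.instance Definition _ := Monoid.isComLaw.Build R 0%R Rplus (fun a b c => esym (Rplus_assoc a b c)) Rplus_comm Rplus_0_l.

Local Open Scope R_scope.

Lemma iter_const k a : iter k (Rplus a) 0 = INR k * a.
Proof. elim: k => [|k IH]; first by simpl; lra. rewrite iterS IH S_INR; lra. Qed.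

Section Sums.
Variable n : nat.
Implicit Types F H : 'I_n -> R.

Lemma sumD F H : \big[Rplus/0]_(i < n) (F i + H i) = \big[Rplus/0]_(i < n) F i + \big[Rplus/0]_(i < n) H i.
Proof. exact: big_split. Qed.

Lemma sumZ c F : \big[Rplus/0]_(i < n) (c * F i) = c * \big[Rplus/0]_(i < n) F i.
Proof.
elim/big_rec2: _ => [|i y1 y2 _ ->]; first by rewrite Rmult_0_r.
by rewrite Rmult_plus_distr_l.
Qed.

Lemma sum_ge0 F : (forall i, 0 <= F i) -> 0 <= \big[Rplus/0]_(i < n) F i.
Proof.
move=> h; elim/big_ind: _ => //; [lra| move=> x y; lra].
Qed.

Lemma sum_le F H : (forall i, F i <= H i) -> \big[Rplus/0]_(i < n) F i <= \big[Rplus/0]_(i < n) H i.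
Proof.
move=> h; elim/big_ind2: _ => //; [lra| move=> x1 x2 y1 y2; lra].
Qed.

Lemma term_le F j : (forall i, 0 <= F i) -> F j <= \big[Rplus/0]_(i < n) F i.
Proof.
move=> h; rewrite (bigD1 j) //=.
have : 0 <= \big[Rplus/0]_(i < n | i != j) F i.
  elim/big_ind: _ => //; [lra| move=> x y; lra].
move=> hh; have := Rplus_le_compat_l (F j) _ _ hh; rewrite Rplus_0_r; exact.
Qed.

Lemma sum_sq_le F : \big[Rplus/0]_(i < n) (F i * F i) <= (\big[Rplus/0]_(i < n) Rabs (F i)) ^ 2.
Proof.
suff: 0 <= \big[Rplus/0]_(i < n) Rabs (F i) /\
   \big[Rplus/0]_(i < n) (F i * F i) <= (\big[Rplus/0]_(i < n) Rabs (F i)) ^ 2 by case.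
elim/big_rec2: _ => [|i y1 y2 _ [h1 h2]]; first by simpl; lra.
have a0 := Rabs_pos (F i).
have e : F i * F i = Rabs (F i) * Rabs (F i).
  by rewrite -Rabs_mult Rabs_right //; apply: Rle_ge; apply: Rle_0_sqr.
split; first lra. rewrite e. nra.
Qed.

Lemma sum_const_le F a : (forall i, F i <= a) -> \big[Rplus/0]_(i < n) F i <= INR n * a.
Proof.
move=> h; apply: (Rle_trans _ (\big[Rplus/0]_(i < n) a)); first exact: sum_le.
rewrite big_const_ord; apply: Req_le; apply: iter_const.
Qed.
End Sums.

Set Implicit Arguments.

Section Vecs.
Variable d : nat.
Implicit Types x y : Vec d.

Lemma vdot_ge0 x : 0 <= vdot x x.
Proof. apply: sum_ge0 => i; apply: Rle_0_sqr. Qed.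

Lemma vnorm_ge0 x : 0 <= vnorm x.
Proof. exact: sqrt_pos. Qed.

Lemma vnorm_sq x : vnorm x * vnorm x = vdot x x.
Proof. apply: sqrt_sqrt; exact: vdot_ge0. Qed.

Lemma vdot_expand lam x y :
  \big[Rplus/0]_(i < d) ((lam * x i + y i) * (lam * x i + y i)) =
  lam * lam * vdot x x + 2 * lam * vdot x y + vdot y y.
Proof. rewrite /vdot -!sumZ -!sumD; apply: eq_bigr => i _; ring. Qed.

Lemma vdot_sym x y : vdot x y = vdot y x.
Proof. apply: eq_bigr => i _; ring. Qed.

Lemma CS x y : vdot x y <= vnorm x * vnorm y.
Proof.
set a := vdot x x; set b := vdot x y; set c := vdot y y.
have Q : forall lam, 0 <= lam * lam * a + 2 * lam * b + c.
  move=> lam; rewrite -vdot_expand; apply: sum_ge0 => i; apply: Rle_0_sqr.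
have ha : 0 <= a by apply: vdot_ge0.
have hc : 0 <= c by apply: vdot_ge0.
have hb2 : b * b <= a * c.
  case: (Rle_lt_or_eq_dec _ _ ha) => ha'.
  - have hq := Q (- b / a).
    have e : a * ((- b / a) * (- b / a) * a + 2 * (- b / a) * b + c) = a * c - b * b.
      field; lra.
    have := Rmult_le_pos _ _ ha hq; lra.
  - rewrite -ha'; case: (Req_dec b 0) => hb; first by rewrite hb; lra.
    have hq := Q (- (c + 1) / (2 * b)).
    have e : (- (c + 1) / (2 * b)) * (- (c + 1) / (2 * b)) * a + 2 * (- (c + 1) / (2 * b)) * b + c = -1.
      rewrite -ha'; field; lra.
    lra.
have h1 : b <= Rabs b by apply: Rle_abs.
have h2 : Rabs b = sqrt (b * b) by rewrite -sqrt_Rsqr_abs.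
have h3 : sqrt (b * b) <= sqrt (a * c) by apply: sqrt_le_1_alt.
rewrite (sqrt_mult a c) // in h3.
rewrite /vnorm -/a -/c. lra.
Qed.

Lemma vnorm_tri x y : vnorm (vadd x y) <= vnorm x + vnorm y.
Proof.
have e : vdot (vadd x y) (vadd x y) = 1 * 1 * vdot x x + 2 * 1 * vdot x y + vdot y y.
  rewrite -vdot_expand; apply: eq_bigr => i _; rewrite /vadd; ring.
have hc := CS x y.
have nx := vnorm_sq x; have ny := vnorm_sq y.
have p1 := vnorm_ge0 x; have p2 := vnorm_ge0 y.
rewrite -[X in _ <= X]sqrt_square; last lra. rewrite {1}/vnorm.
apply: sqrt_le_1_alt; rewrite e -nx -ny; nra.
Qed.

Lemma coord_le x i : Rabs (x i) <= vnorm x.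
Proof.
rewrite -sqrt_Rsqr_abs; apply: sqrt_le_1_alt; rewrite /Rsqr.
apply: (@term_le d (fun i => x i * x i)) => k; apply: Rle_0_sqr.
Qed.

Lemma vnorm_le_sum x : vnorm x <= \big[Rplus/0]_(i < d) Rabs (x i).
Proof.
have h0 : 0 <= \big[Rplus/0]_(i < d) Rabs (x i) by apply: sum_ge0 => i; apply: Rabs_pos.
rewrite /vnorm -[X in _ <= X]sqrt_square //; apply: sqrt_le_1_alt.
have := @sum_sq_le d x; rewrite /= Rmult_1_r; exact.
Qed.

Lemma vnorm0 x : vnorm x = 0 -> x = @vzero d.
Proof.
move=> h; apply: functional_extensionality => i; rewrite /vzero.
have := coord_le x i; rewrite h => h'.
have := Rabs_pos (x i) => h''.
case: (Rcase_abs (x i)) => hx; [rewrite Rabs_left in h'; lra | rewrite Rabs_right in h'; lra].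
Qed.

Lemma vdist_sym x y : dist x y = dist y x.
Proof. rewrite /dist /vnorm; f_equal; apply: eq_bigr => i _; rewrite /vsub; ring. Qed.

Lemma vdist_tri x y w : dist x w <= dist x y + dist y w.
Proof.
rewrite /dist; have -> : vsub x w = vadd (vsub x y) (vsub y w).
  by apply: functional_extensionality => i; rewrite /vsub /vadd; ring.
exact: vnorm_tri.
Qed.

Lemma vdist0 x : dist x (@vzero d) = vnorm x.
Proof. rewrite /dist; f_equal; apply: functional_extensionality => i; rewrite /vsub /vzero; ring. Qed.

Lemma vnorm_le (a b : Vec d) : vnorm a <= vnorm b + dist a b.
Proof.
have := vdist_tri a b (@vzero d); rewrite !vdist0 vdist_sym; lra.
Qed.

Lemma vdist_ge0 x y : 0 <= dist x y.
Proof. exact: vnorm_ge0. Qed.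

Lemma dist_le_norms x y : dist x y <= vnorm x + vnorm y.
Proof. have := vdist_tri x (@vzero d) y; rewrite vdist0 (vdist_sym (@vzero d) y) vdist0; lra. Qed.

End Vecs.


Lemma pow_le1 c k : 0 <= c < 1 -> c ^ k <= 1.
Proof.
move=> hc; case: k => [|k]; first by simpl; lra.
have := pow_lt_1_compat c k.+1 hc (Nat.lt_0_succ k); lra.
Qed.

Section Aff.
Variables (d N : nat) (A : nat -> Mat d) (t : nat -> Vec d).

Lemma mv_sub M (x y : Vec d) : mv M (vsub x y) = vsub (mv M x) (mv M y).
Proof.
apply: functional_extensionality => i; rewrite /mv /vsub.
have -> : \big[Rplus/0]_(j < d) (M i j * (x j - y j)) =
  \big[Rplus/0]_(j < d) (M i j * x j + (-1) * (M i j * y j)).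
  by apply: eq_bigr => j _; ring.
rewrite sumD sumZ; ring.
Qed.

Lemma fmap_sub i (x y : Vec d) : vsub (fmap A t i x) (fmap A t i y) = mv (A i) (vsub x y).
Proof.
rewrite mv_sub; apply: functional_extensionality => k; rewrite /fmap /vsub /vadd; ring.
Qed.

Lemma fword_sub w (x y : Vec d) : vsub (fword A t w x) (fword A t w y) = Aword A w (vsub x y).
Proof.
elim: w => [|i w IH] //=.
by rewrite -IH -fmap_sub.
Qed.

Lemma fword_cat u v (x : Vec d) : fword A t (u ++ v) x = fword A t u (fword A t v x).
Proof. by rewrite /fword foldr_cat. Qed.

Lemma fword_nseq_fix i k (p : Vec d) : fmap A t i p = p -> fword A t (nseq k i) p = p.
Proof. move=> h; elim: k => [|k IH] //=; by rewrite IH h. Qed.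

Lemma common_c n : (forall i, (i < n)%N -> is_contraction (fmap A t i)) ->
  exists c, 0 <= c < 1 /\ forall i, (i < n)%N -> forall x y,
     dist (fmap A t i x) (fmap A t i y) <= c * dist x y.
Proof.
elim: n => [|n IH] h.
  by exists 0; split; [lra | move=> i].
have [c [hc Hc]] := IH (fun i hi => h i (ltnW hi)).
have [c' [hc' Hc']] := h n (ltnSn n).
exists (Rmax c c'); split.
  split; first by apply: Rle_trans (Rmax_l _ _); lra.
  by apply: Rmax_lub_lt; lra.
move=> i; rewrite ltnS leq_eqVlt => /orP [/eqP -> | hi] x y.
- apply: Rle_trans (Hc' x y) _; apply: Rmult_le_compat_r; [exact: vdist_ge0 | exact: Rmax_r].
- apply: Rle_trans (Hc i hi x y) _; apply: Rmult_le_compat_r; [exact: vdist_ge0 | exact: Rmax_l].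
Qed.

Variable c : R.
Hypothesis hc : 0 <= c < 1.
Hypothesis Hc : forall i, (i < N)%N -> forall x y, dist (fmap A t i x) (fmap A t i y) <= c * dist x y.

Lemma fword_contr w (x y : Vec d) : all (fun i => (i < N)%N) w ->
  dist (fword A t w x) (fword A t w y) <= c ^ (size w) * dist x y.
Proof.
elim: w => [|i w IH] /=; first by move=> _; lra.
move=> /andP [hi hw].
apply: Rle_trans (Hc _ hi _ _) _.
rewrite Rmult_assoc; apply: Rmult_le_compat_l; [lra | exact: IH].
Qed.

Lemma fword_contr1 w (x y : Vec d) : all (fun i => (i < N)%N) w ->
  dist (fword A t w x) (fword A t w y) <= dist x y.
Proof.
move=> hw; apply: Rle_trans (@fword_contr w x y hw) _.
have := @pow_le1 c (size w) hc; have := vdist_ge0 x y; have := pow_le c (size w) (proj1 hc).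
nra.
Qed.

End Aff.

Section Attr.
Variables (d N : nat) (A : nat -> Mat d) (t : nat -> Vec d) (G : Vec d -> Prop).
Hypothesis HG : is_attractor N A t G.

Lemma G_inv w x : G x -> all (fun i => (i < N)%N) w -> G (fword A t w x).
Proof.
move=> gx; elim: w => [|i w IH] //= /andP [hi hw].
case: HG => _ [_ h]; apply/h; exists i; split => //; exists (fword A t w x); split => //.
exact: IH.
Qed.

Lemma G_bounded : exists R0, forall x, G x -> vnorm x <= R0.
Proof.
case: HG => _ [hK _].
have := hK nat (fun k x => vnorm x < INR k).
case.
- move=> k x hx; exists (INR k - vnorm x); split; first lra.
  move=> y hy; have := vnorm_le y x; lra.
- move=> x _; have [n hn] := INR_archimed 1 (vnorm x) Rlt_0_1.
  by exists n; lra.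
move=> l hl.
exists (List.fold_right (fun i acc => Rmax (INR i) acc) 0 l) => x gx.
have [i [hi hv]] := hl x gx.
suff : INR i <= List.fold_right (fun i acc => Rmax (INR i) acc) 0 l by lra.
elim: l hi {hl} => [|a l IH] //= [-> | hi]; first exact: Rmax_l.
apply: Rle_trans (IH hi) _; exact: Rmax_r.
Qed.

End Attr.


Section Lim.
Variable d : nat.

Lemma cauchy_conv (s : nat -> Vec d) :
  (forall e, 0 < e -> exists n0, forall n m, (n0 <= n)%N -> (n0 <= m)%N -> dist (s n) (s m) < e) ->
  exists L, converges s L.
Proof.
move=> hs.
have hC : forall i, Cauchy_crit (fun n => s n i).
  move=> i e he; have [n0 hn0] := hs e he; exists n0 => n m hn hm.
  rewrite /R_dist; apply: Rle_lt_trans (hn0 n m _ _); first exact: (coord_le (vsub (s n) (s m)) i).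
  - by apply/leP. - by apply/leP.
pose L := fun i => proj1_sig (R_complete _ (hC i)).
have hL : forall i, Un_cv (fun n => s n i) (L i) by move=> i; exact: proj2_sig (R_complete _ (hC i)).
exists L => e he.
have hd : 0 < INR d + 1 by have := pos_INR d; lra.
pose e' := e / (INR d + 1).
have he' : 0 < e' by apply: Rdiv_lt_0_compat.
pose P := fun i (k : nat) => forall n, (k <= n)%N -> Rabs (s n i - L i) < e'.
have hP : forall i, exists k, P i k.
  move=> i; have [k hk] := hL i e' he'; exists k => n hn; apply: hk; exact/leP.
pose nf := fun i => epsilon (inhabits 0%N) (P i).
have hnf : forall i, P i (nf i) by move=> i; exact: epsilon_spec (hP i).
exists (\max_(i < d) nf i) => n hn.
apply: Rle_lt_trans (vnorm_le_sum _) _.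
apply: Rle_lt_trans.
  apply: (@sum_const_le d _ e') => i; apply: Rlt_le; apply: hnf.
  apply: leq_trans _ hn; exact: (@leq_bigmax _ nf i).
rewrite /e'.
have -> : INR d * (e / (INR d + 1)) = e * (INR d / (INR d + 1)) by field; lra.
have : INR d / (INR d + 1) < 1.
  apply: (Rmult_lt_reg_r (INR d + 1)) => //; rewrite /Rdiv Rmult_assoc Rinv_l; lra.
nra.
Qed.

Lemma lim_bound (s : nat -> Vec d) x p D n0 :
  converges s x -> (forall n, (n0 <= n)%N -> dist (s n) p <= D) -> dist x p <= D.
Proof.
move=> hx hb; apply: Rnot_lt_le => hlt.
have [n1 hn1] := hx (dist x p - D) ltac:(lra).
have h1 := hn1 (maxn n0 n1) (leq_maxr _ _).
have h2 := hb (maxn n0 n1) (leq_maxl _ _).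
have h3 := vdist_tri x (s (maxn n0 n1)) p.
rewrite vdist_sym in h1; lra.
Qed.
End Lim.

Lemma pref_all N ii n : inSigma N ii -> all (fun i => (i < N)%N) (pref ii n).
Proof. move=> h; apply/allP => k /mapP [m _ ->]; exact: h. Qed.

Lemma size_pref ii n : size (pref ii n) = n.
Proof. exact: size_mkseq. Qed.

Lemma pref_split ii n m : (n <= m)%N ->
  pref ii m = pref ii n ++ mkseq (fun k => ii (n + k)%N) (m - n).
Proof.
move=> h; rewrite /pref /mkseq -{1}(subnKC h) iotaD map_cat; congr (_ ++ _).
by rewrite add0n -{1}(addn0 n) iotaDl -map_comp.
Qed.

Lemma cyl_pref j ii n : cylinder j ii -> (n <= size j)%N -> pref ii n = take n j.
Proof.
move=> hc hn; apply: (@eq_from_nth _ 0%N); first by rewrite size_pref size_take_min (minn_idPl hn).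
move=> k; rewrite size_pref => hk.
rewrite nth_mkseq // nth_take //; apply: hc; exact: leq_trans hk hn.
Qed.

Lemma all_mkseq N (f : nat -> nat) m : (forall k, (f k < N)%N) -> all (fun i => (i < N)%N) (mkseq f m).
Proof. move=> h; apply/allP => k /mapP [r _ ->]; exact: h. Qed.

Section Pi.
Variables (d N : nat) (A : nat -> Mat d) (t : nat -> Vec d) (c B : R).
Hypothesis hc : 0 <= c < 1.
Hypothesis Hc : forall i, (i < N)%N -> forall x y, dist (fmap A t i x) (fmap A t i y) <= c * dist x y.
Hypothesis HB : forall u, all (fun i => (i < N)%N) u -> vnorm (fword A t u (@vzero d)) <= B.

Lemma Pi_conv ii : inSigma N ii ->
  converges (fun n => fword A t (pref ii n) (@vzero d)) (Pi A t ii).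
Proof.
move=> hS; rewrite /Pi; apply: epsilon_spec; apply: cauchy_conv => e he.
have hB0 : 0 <= B by apply: Rle_trans (vnorm_ge0 _) (HB [::] isT).
have [n0 hn0] := pow_lt_1_zero c ltac:(rewrite Rabs_right; lra) (e / (B + 1)) ltac:(apply: Rdiv_lt_0_compat; lra).
have key : forall n m, (n0 <= n)%N -> (n <= m)%N ->
   dist (fword A t (pref ii m) (@vzero d)) (fword A t (pref ii n) (@vzero d)) < e.
  move=> n m hn hm; rewrite (@pref_split ii n m hm) fword_cat.
  apply: Rle_lt_trans (fword_contr _ _ _ hc Hc _ _ _ (pref_all n hS)) _.
  rewrite size_pref vdist0.
  have hb := HB _ (@all_mkseq N (fun k => ii (n + k)%N) (m - n) (fun k => hS (n + k)%N)).
  have hp := hn0 n ltac:(exact/leP).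
  rewrite Rabs_right in hp; last by apply: Rle_ge; apply: pow_le; lra.
  have hpp : 0 <= c ^ n by apply: pow_le; lra.
  have : c ^ n * (B + 1) < e.
    by have := Rmult_lt_compat_r (B + 1) _ _ ltac:(lra) hp; rewrite /Rdiv Rmult_assoc Rinv_l; lra.
  nra.
exists n0 => n m hn hm.
case/orP: (leq_total n m) => h.
- rewrite vdist_sym; exact: key.
- exact: key.
Qed.
End Pi.


Lemma fword_nseqS d (A : nat -> Mat d) t i k a :
  fword A t (nseq k.+1 i) a = fword A t (nseq k i) (fmap A t i a).
Proof. elim: k => [|k IH] //=; by rewrite -IH. Qed.

Unset Implicit Arguments.

Theorem lemma3p1 (d N : nat) (A : nat -> Mat d) (t : nat -> Vec d) (z : nat -> Vec d)
  (G : Vec d -> Prop) (Mc : Vec d -> Prop) :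
  zipper0 N A t z -> is_attractor N A t G -> dominated_index1 N A Mc ->
  nondegenerate N A t z G Mc ->
  exists (n l m : nat) (j : seq nat),
    (1 <= n)%N /\ (1 <= l)%N /\ (1 <= m)%N /\ size j = l /\ all (fun i => (i < N)%N) j /\
    (forall ii, inB N A t G Mc n l m ii -> cylinder j ii -> False).
Proof.
move=> [hcontr hvert] hAt hDom [_ [w [hw hv]]].
have [c [hc Hc]] := common_c N (fun i hi => proj2 (hcontr i hi)).
have [g0 hg0] := proj1 hAt.
have hN : (0 < N)%N.
  have := (proj2 (proj2 hAt) g0); case=> /(_ hg0) [i [hi _]] _; exact: leq_ltn_trans hi.
have [R0 HR0] := G_bounded hAt.
have fz0 : fmap A t 0 (z 0%N) = z 0%N by exact: proj1 (hvert 0%N hN).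
have fzN : fmap A t N.-1 (z N) = z N.
  by have := proj2 (hvert N.-1 ltac:(by rewrite prednK)); rewrite prednK.
have hN1 : (N.-1 < N)%N by rewrite prednK.
have [[hcone hopen] _] := hDom.
set v := Aword A w (vsub (z N) (z 0%N)) in hv.
set p := fword A t w (z 0%N).
set q := fword A t w (z N).
have hvq : v = vsub q p by rewrite /v /q /p fword_sub.
set r := vnorm v.
have hr : 0 < r.
  case: (Rle_lt_or_eq_dec _ _ (vnorm_ge0 v)) => // h.
  exfalso; apply: (proj1 hcone v hv); apply: vnorm0; by rewrite -h.
have [e [he He]] := hopen v hv.
set eta := Rmin e r / 4.
have heta : 0 < eta by rewrite /eta; have := Rmin_glb_lt _ _ _ he hr; lra.
have heta1 : eta <= e / 4 by rewrite /eta; have := Rmin_l e r; lra.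
have heta2 : eta <= r / 4 by rewrite /eta; have := Rmin_r e r; lra.
have hg0n := vnorm_ge0 g0; have hz0n := vnorm_ge0 (z 0%N); have hzNn := vnorm_ge0 (z N).
have hR0 : 0 <= R0 by apply: Rle_trans (vnorm_ge0 g0) (HR0 g0 hg0).
set B1 := R0 + vnorm g0.
set B := B1 + vnorm (z 0%N).
have HB : forall u, all (fun i => (i < N)%N) u -> vnorm (fword A t u (@vzero d)) <= B1.
  move=> u hu.
  have h1 := vnorm_le (fword A t u (@vzero d)) (fword A t u g0).
  have h2 := fword_contr1 _ _ _ hc Hc _ (@vzero d) g0 hu.
  have h3 := HR0 _ (G_inv hAt u g0 hg0 hu).
  rewrite (vdist_sym (@vzero d) g0) vdist0 in h2; rewrite /B1; lra.
have hc0 : 0 <= c by lra.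
have [K0 hK0] := pow_lt_1_zero c ltac:(rewrite Rabs_right; lra)
   (eta / (vnorm g0 + vnorm (z N) + 1)) ltac:(apply: Rdiv_lt_0_compat; lra).
have hK := hK0 K0 (le_n _).
rewrite Rabs_right in hK; last by apply: Rle_ge; apply: pow_le.
set g := fword A t (nseq K0 N.-1) g0.
have hallN1 : forall k, all (fun i => (i < N)%N) (nseq k N.-1) by move=> k; rewrite all_nseq hN1 orbT.
have hall0 : forall k, all (fun i => (i < N)%N) (nseq k 0%N) by move=> k; rewrite all_nseq hN orbT.
have hGg : G g by apply: (G_inv hAt).
have hgz : dist g (z N) < eta.
  have h1 := fword_contr _ _ _ hc Hc _ g0 (z N) (hallN1 K0).
  rewrite size_nseq (fword_nseq_fix _ fzN) in h1.
  have h2 := dist_le_norms g0 (z N).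
  have hpk := pow_le c K0 hc0.
  have : c ^ K0 * (vnorm g0 + vnorm (z N) + 1) < eta.
    have := Rmult_lt_compat_r (vnorm g0 + vnorm (z N) + 1) _ _ ltac:(lra) hK.
    rewrite /Rdiv Rmult_assoc Rinv_l; lra.
  rewrite /g; nra.
set y := fword A t w g.
have hGy : G y by apply: (G_inv hAt).
have hyq : dist y q < eta.
  by apply: Rle_lt_trans (fword_contr1 _ _ _ hc Hc _ g (z N) hw) hgz.
have hB0 : 0 <= B by rewrite /B /B1; lra.
have [k1 hk1] := pow_lt_1_zero c ltac:(rewrite Rabs_right; lra)
   (eta / (B + 1)) ltac:(apply: Rdiv_lt_0_compat; lra).
have hk := hk1 k1 (le_n _).
rewrite Rabs_right in hk; last by apply: Rle_ge; apply: pow_le.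
set D := c ^ k1 * B.
have hD : D < eta.
  have hpk := pow_le c k1 hc0.
  have := Rmult_lt_compat_r (B + 1) _ _ ltac:(lra) hk.
  rewrite /Rdiv Rmult_assoc Rinv_l; rewrite /D; nra.
have Near : forall a, dist a (z 0%N) <= B -> dist (fword A t w (fword A t (nseq k1 0%N) a)) p <= D.
  move=> a ha.
  have -> : p = fword A t w (fword A t (nseq k1 0%N) (z 0%N)) by rewrite (fword_nseq_fix _ fz0).
  apply: Rle_trans (fword_contr1 _ _ _ hc Hc _ _ _ hw) _.
  have h1 := fword_contr _ _ _ hc Hc _ a (z 0%N) (hall0 k1).
  rewrite size_nseq in h1.
  have hpk := pow_le c k1 hc0.
  rewrite /D; apply: Rle_trans h1 _; apply: Rmult_le_compat_l => //.
have GB : forall a, G a -> dist a (z 0%N) <= B.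
  move=> a ga; have := dist_le_norms a (z 0%N); have := HR0 a ga; rewrite /B /B1; lra.
have Far : forall y', dist y' p <= D -> y' = y -> False.
  move=> y' h1 h2; subst y'.
  have h3 := vdist_tri q y p.
  have : dist q p = r by rewrite /r hvq.
  rewrite vdist_sym in hyq; lra.
have [n [hn hn0]] := archimed_cor1 (r / 2) ltac:(lra).
set j := w ++ nseq k1.+1 0%N.
set l := (size w + k1.+1)%N.
have hsj : size j = l by rewrite /j size_cat size_nseq.
exists n, l, 1%N, j; split; first by apply/leP.
split; first by rewrite /l addnS.
split => //; split => //; split; first by rewrite /j all_cat hw hall0.
move=> ii [hS hBii] hcyl.
have hpl : pref ii l = j by rewrite (cyl_pref l hcyl) ?hsj // -hsj take_size.
have hl1 : l.-1 = (size w + k1)%N by rewrite /l addnS.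
have hpl1 : pref ii l.-1 = w ++ nseq k1 0%N.
  rewrite (cyl_pref l.-1 hcyl); last by rewrite hsj hl1 /l leq_add2l.
  rewrite hl1 /j take_cat ltnNge leq_addr /= addKn; congr (_ ++ _); exact: (@take_nseq _ k1 k1.+1 0%N (leqnSn k1)).
have hil : ii l.-1 = 0%N.
  rewrite (hcyl l.-1); last by rewrite hsj hl1 /l addnS.
  by rewrite hl1 /j nth_cat ifF ?addKn ?nth_nseq ?ltnSn // ltnNge leq_addr.
set x := Pi A t ii.
have hx : dist x p <= D.
  apply: (lim_bound p l (@Pi_conv d N A t c B1 hc Hc HB ii hS)) => m hm.
  rewrite (@pref_split ii l m hm) hpl fword_cat /j fword_cat fword_nseqS.
  apply: Near.
  set q' := fword A t _ (@vzero d).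
  rewrite -fz0; apply: Rle_trans (Hc _ hN _ _) _.
  have hq' : vnorm q' <= B1 by apply: HB; apply: all_mkseq => k; exact: hS.
  have := dist_le_norms q' (z 0%N); have := vdist_ge0 q' (z 0%N).
  rewrite /B; nra.
apply: (hBii y).
- apply: He; rewrite /dist.
  have -> : vsub (vsub y x) v = vadd (vsub y q) (vsub p x).
    rewrite hvq; apply: functional_extensionality => i; rewrite /vsub /vadd; ring.
  apply: Rle_lt_trans (vnorm_tri _ _) _.
  have : dist p x = dist x p by apply: vdist_sym.
  rewrite /dist in hyq hx * => ?; lra.
- move=> hlt.
  have h1 := vnorm_le v (vsub y x).
  have h2 : dist v (vsub y x) < 2 * eta.
    have -> : dist v (vsub y x) = vnorm (vadd (vsub q y) (vsub x p)).
      rewrite /dist hvq; f_equal; apply: functional_extensionality => i; rewrite /vsub /vadd; ring.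
    apply: Rle_lt_trans (vnorm_tri _ _) _.
    have : dist q y = dist y q by apply: vdist_sym.
    rewrite /dist in hx hyq *; lra.
  rewrite /dist -/x in hlt; rewrite -/r in h1; lra.
- exact: hGy.
- rewrite hpl => [[a [ga hy]]].
  apply: (Far (fword A t j a)) => //.
  rewrite /j fword_cat fword_nseqS; apply: Near; apply: GB; apply: (G_inv hAt [:: 0%N]) => //=.
  by rewrite hN.
- by rewrite hil; case.
- rewrite hil hpl1 => [[hN2 [a [ga hy]]]].
  have h1N : (1 < N)%N.
    move: hN2; case: (N) => [|[|N']] //.
  apply: (Far _ _ (esym hy)).
  rewrite -cats1 -catA fword_cat fword_cat /=.
  apply: Near; apply: GB.
  apply: (G_inv hAt [:: 1%N; 0%N]) => //=.
  by rewrite h1N hN.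
Qed.
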